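(* Let $\pi$ be a policy, $h:\mathcal S\to\mathbb R$ bounded, $\lambda\in[0,1]$, and $\epsilon_l,\epsilon_u\ge0$ such that $-\epsilon_l\le h(s)-V^\pi(s)\le\epsilon_u$ for all $s\in\mathcal S$. Then for all $s\in\mathcal S$, $$-\epsilon_l-\frac{(1-\lambda)\gamma\,\epsilon_u}{1-\lambda\gamma}\le h(s)-\widetilde V^\pi(s)\le\epsilon_u+\frac{(1-\lambda)\gamma\,\epsilon_l}{1-\lambda\gamma}.$$
   Context: Let $\mathcal M=(\mathcal S,\mathcal A,P,r,\gamma)$ be a discounted MDP with transition kernel $P(\cdot|s,a)$, reward $r:\mathcal S\times\mathcal A\to[0,1]$ and discount $\gamma\in[0,1)$. A policy $\pi$ is a Markov kernel from $\mathcal S$ to distributions on $\mathcal A$; $\rho^\pi(s)$ is the trajectory law with $s_0=s$, $a_t\sim\pi(\cdot|s_t)$, $s_{t+1}\sim P(\cdot|s_t,a_t)$. $V^\pi(s)=\mathbb E_{\rho^\pi(s)}[\sum_t\gamma^tr(s_t,a_t)]$. Reshaped MDP: $\widetilde{\mathcal M}=(\mathcal S,\mathcal A,P,\widetilde r,\lambda\gamma)$ with $\widetilde r(s,a)=r(s,a)+(1-\lambda)\gamma\,\mathbb E_{s'\sim P(\cdot|s,a)}[h(s')]$, and $\widetilde V^\pi(s)=\mathbb E_{\rho^\pi(s)}[\sum_t(\lambda\gamma)^t\widetilde r(s_t,a_t)]$. *)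

(* Defs.v *)
From HB Require Import structures.
From mathcomp Require Import all_boot all_order all_algebra.
From mathcomp Require Import all_classical all_reals all_analysis.
Set Implicit Arguments. Unset Strict Implicit. Unset Printing Implicit Defensive.
Import Order.TTheory GRing.Theory Num.Theory numFieldNormedType.Exports.
Local Open Scope classical_set_scope.
Local Open Scope ring_scope.

Section MDP.
Context (dS dA : measure_display) (S : measurableType dS) (A : measurableType dA)
  (R : realType).

Definition pol_step (pi : R.-pker S ~> A) (P : R.-pker (S * A) ~> S)
  (f : S -> R) : S -> R :=
  fun s => Rintegral (pi s) setT (fun a => Rintegral (P (s, a)) setT f).

Definition pol_reward (pi : R.-pker S ~> A) (rr : S * A -> R) : S -> R :=
  fun s => Rintegral (pi s) setT (fun a => rr (s, a)).

(* E_{rho^pi(s)} [rr (s_t, a_t)] = (P_pi^t r_pi)(s) : the time-t marginal of the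
   trajectory law rho^pi(s) (Ionescu-Tulcea), written via iterated kernels. *)
Definition step_expect (pi : R.-pker S ~> A) (P : R.-pker (S * A) ~> S)
  (rr : S * A -> R) (t : nat) : S -> R :=
  iter t (pol_step pi P) (pol_reward pi rr).

(* discounted value E_{rho^pi(s)} [ sum_t g^t rr(s_t,a_t) ] = sum_t g^t E[rr(s_t,a_t)] *)
Definition value (pi : R.-pker S ~> A) (P : R.-pker (S * A) ~> S)
  (rr : S * A -> R) (g : R) (s : S) : R :=
  limn (series (fun t => g ^+ t * step_expect pi P rr t s)).

Definition reshaped_reward (P : R.-pker (S * A) ~> S) (r : S * A -> R)
  (h : S -> R) (lam g : R) : S * A -> R :=
  fun sa => r sa + (1 - lam) * g * Rintegral (P sa) setT h.

End MDP.

(* Main.v *)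
Require Import Defs.
From HB Require Import structures.
From mathcomp Require Import all_boot all_order all_algebra.
From mathcomp Require Import all_classical all_reals all_analysis.
From mathcomp Require Import measurable_realfun.
From mathcomp Require Import lra ring.
Import Order.TTheory GRing.Theory Num.Theory numFieldNormedType.Exports.
Local Open Scope classical_set_scope.
Local Open Scope ring_scope.

Set Implicit Arguments. Unset Strict Implicit. Unset Printing Implicit Defensive.
Section prob.
Context d (T : measurableType d) (R : realType) (mu : {measure set T -> \bar R})
  (mu1 : mu setT = 1%E).

Definition bmf (f : T -> R) := measurable_fun setT f /\ exists M, forall x, `|f x| <= M.

Lemma bmf_int f : bmf f -> mu.-integrable setT (EFin \o f).
Proof.
move=> [mf [M hM]]; apply/integrableP; split; first exact/measurable_EFinP.
apply: (@le_lt_trans _ _ ((`|M|)%:E * mu setT)%E).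
  apply: integral_le_bound => //; first exact/measurable_EFinP.
  by apply: aeW => x _ /=; rewrite lee_fin (le_trans (hM x)) // ler_norm.
by rewrite mu1 mule1 ltry.
Qed.

Lemma Rint_cst c : Rintegral mu setT (fun _ => c) = c.
Proof. by rewrite Rintegral_cst // mu1 /= mulr1. Qed.

Lemma Rint_bnd f a b : bmf f -> (forall x, a <= f x <= b) ->
  a <= Rintegral mu setT f <= b.
Proof.
move=> bf hab; have cI c : mu.-integrable setT (EFin \o (fun _ : T => c)).
  by apply: bmf_int; split => //; exists `|c|.
apply/andP; split.
  rewrite -{1}(Rint_cst a); apply: le_Rintegral => //; first exact: bmf_int.
  by move=> x _; case/andP: (hab x).
rewrite -(Rint_cst b); apply: le_Rintegral => //; first exact: bmf_int.
by move=> x _; case/andP: (hab x).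
Qed.

Lemma RintD' f g : bmf f -> bmf g ->
  Rintegral mu setT (fun x => f x + g x) = Rintegral mu setT f + Rintegral mu setT g.
Proof. by move=> bf bg; rewrite RintegralD //; exact: bmf_int. Qed.

Lemma RintZ' f c : bmf f ->
  Rintegral mu setT (fun x => c * f x) = c * Rintegral mu setT f.
Proof. by move=> bf; rewrite RintegralZl //; exact: bmf_int. Qed.

End prob.

Lemma bmfD d (T : measurableType d) (R : realType) (f g : T -> R) :
  bmf f -> bmf g -> bmf (fun x => f x + g x).
Proof.
move=> [mf [M hM]] [mg [N hN]]; split; first exact: measurable_funD.
by exists (M + N) => x; rewrite (le_trans (ler_normD _ _)) // lerD.
Qed.

Lemma bmfZ d (T : measurableType d) (R : realType) (f : T -> R) c :
  bmf f -> bmf (fun x => c * f x).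
Proof.
move=> [mf [M hM]]; split; first exact: measurable_funM.
by exists (`|c| * M) => x; rewrite normrM ler_wpM2l.
Qed.

Lemma bmf_cst d (T : measurableType d) (R : realType) (c : R) :
  bmf (fun _ : T => c).
Proof. by split => //; exists `|c|. Qed.

Lemma bmf_bnd d (T : measurableType d) (R : realType) (f : T -> R) a b :
  measurable_fun setT f -> (forall x, a <= f x <= b) -> bmf f.
Proof.
move=> mf hab; split => //; exists (`|a| + `|b|) => x.
have /andP[h1 h2] := hab x.
have a1 := ler_norm a; have a2 := ler_norm (- a); have b1 := ler_norm b;
have b2 := ler_norm (- b); rewrite !normrN in a2 b2.
rewrite ler_norml; apply/andP; split; lra.
Qed.

Lemma bmf_sec d d' (X : measurableType d) (Y : measurableType d') (R : realType)
  (g : X * Y -> R) x : bmf g -> bmf (fun y => g (x, y)).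
Proof.
move=> [mg [M hM]]; split; last by exists M.
exact: measurable_fun_pair2.
Qed.

Lemma bmf_bound d (T : measurableType d) (R : realType) (f : T -> R) :
  bmf f -> exists M, forall x, - M <= f x <= M.
Proof. by move=> [_ [M hM]]; exists M => x; rewrite -ler_norml. Qed.

Section ker.
Context d d' (X : measurableType d) (Y : measurableType d') (R : realType)
  (k : R.-pker X ~> Y).

Definition Kop (g : X * Y -> R) : X -> R :=
  fun x => Rintegral (k x) setT (fun y => g (x, y)).

Let k1 x : k x setT = 1%E. Proof. exact: prob_kernel. Qed.

Lemma Kop_bnd g a b : bmf g -> (forall z, a <= g z <= b) ->
  forall x, a <= Kop g x <= b.
Proof.
move=> bg hab x; apply: (Rint_bnd (k1 x)); first exact: bmf_sec.
move=> y; exact: hab.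
Qed.

Lemma KopD g1 g2 : bmf g1 -> bmf g2 ->
  Kop (fun z => g1 z + g2 z) = fun x => Kop g1 x + Kop g2 x.
Proof. by move=> b1 b2; apply/funext => x; rewrite /Kop RintD' //; exact: bmf_sec. Qed.

Lemma KopZ g c : bmf g -> Kop (fun z => c * g z) = fun x => c * Kop g x.
Proof. by move=> b1; apply/funext => x; rewrite /Kop RintZ' //; exact: bmf_sec. Qed.

Lemma Kop_meas g : bmf g -> measurable_fun setT (Kop g).
Proof.
move=> bg; have [M hM] := bmf_bound bg.
have M0 : 0 <= M by have /andP[h1 h2] := hM (point, point); lra.
pose g' z := g z + M.
have bg' : bmf g' by apply: bmfD => //; exact: bmf_cst.
have E : Kop g = fun x => Kop g' x - M.
  apply/funext => x; rewrite /Kop /g' RintD' //; last exact: bmf_cst.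
  - by rewrite Rint_cst // addrK.
  - exact: bmf_sec.
rewrite E; apply: measurable_funB => //.
rewrite /Kop /Rintegral; apply: measurableT_comp; first exact: fine_measurable.
apply: (measurable_fun_integral_finite_kernel (EFin \o g') k).
  by move=> z /=; rewrite lee_fin /g'; have /andP[h1 h2] := hM z; lra.
by apply/measurable_EFinP; case: bg'.
Qed.

Lemma Kop_bmf g : bmf g -> bmf (Kop g).
Proof.
move=> bg; have [M hM] := bmf_bound bg.
apply: (@bmf_bnd _ _ _ _ (- M) M); first exact: Kop_meas.
exact: Kop_bnd.
Qed.

End ker.

Section mdp.
Context (dS dA : measure_display) (S : measurableType dS) (A : measurableType dA)
  (R : realType) (P : R.-pker (S * A) ~> S) (pi : R.-pker S ~> A).

Local Notation T := (pol_step pi P).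

Lemma bmf_snd (f : S -> R) : bmf f -> bmf (fun z : (S * A) * S => f z.2).
Proof.
move=> [mf [M hM]]; split; last by exists M.
exact: measurableT_comp.
Qed.

Definition Pint (f : S -> R) : S * A -> R := Kop P (fun z => f z.2).

Lemma Pint_bmf f : bmf f -> bmf (Pint f).
Proof. by move=> bf; apply: Kop_bmf; exact: bmf_snd. Qed.

Lemma TE f : T f = Kop pi (Pint f).
Proof. by []. Qed.

Lemma T_bmf f : bmf f -> bmf (T f).
Proof. by move=> bf; rewrite TE; apply: Kop_bmf; exact: Pint_bmf. Qed.

Lemma T_bnd f a b : bmf f -> (forall s, a <= f s <= b) -> forall s, a <= T f s <= b.
Proof.
move=> bf hab; rewrite TE; apply: Kop_bnd; first exact: Pint_bmf.
by apply: Kop_bnd; [exact: bmf_snd|move=> z; exact: hab].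
Qed.

Lemma T_D f g : bmf f -> bmf g -> T (fun s => f s + g s) = fun s => T f s + T g s.
Proof.
move=> bf bg; rewrite !TE.
have -> : Pint (fun s => f s + g s) = fun z => Pint f z + Pint g z.
  by rewrite /Pint -KopD //; exact: bmf_snd.
by rewrite KopD //; exact: Pint_bmf.
Qed.

Lemma T_Z f c : bmf f -> T (fun s => c * f s) = fun s => c * T f s.
Proof.
move=> bf; rewrite !TE.
have -> : Pint (fun s => c * f s) = fun z => c * Pint f z.
  by rewrite /Pint -KopZ //; exact: bmf_snd.
by rewrite KopZ //; exact: Pint_bmf.
Qed.

Lemma It_bmf t f : bmf f -> bmf (iter t T f).
Proof. by move=> bf; elim: t => [|t IH] //=; exact: T_bmf. Qed.

Lemma It_bnd t f a b : bmf f -> (forall s, a <= f s <= b) ->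
  forall s, a <= iter t T f s <= b.
Proof.
move=> bf hab; elim: t => [|t IH] //=; apply: T_bnd => //; exact: It_bmf.
Qed.

Lemma It_D t f g : bmf f -> bmf g ->
  iter t T (fun s => f s + g s) = fun s => iter t T f s + iter t T g s.
Proof.
move=> bf bg; elim: t => [|t IH] //=; rewrite IH T_D //; exact: It_bmf.
Qed.

Lemma It_Z t f c : bmf f -> iter t T (fun s => c * f s) = fun s => c * iter t T f s.
Proof.
move=> bf; elim: t => [|t IH] //=; rewrite IH T_Z //; exact: It_bmf.
Qed.

Lemma It_S t f : iter t.+1 T f = iter t T (T f).
Proof. exact: iterSr. Qed.

End mdp.
Section ser.
Context (R : realType).

Lemma geo_tail (q : R) N n : 0 <= q < 1 -> (N <= n)%N ->
  \sum_(N <= t < n) q ^+ t <= q ^+ N / (1 - q).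
Proof.
move=> /andP[q0 q1] Nn; rewrite -(subnKC Nn) geometric_partial_tail.
rewrite geometric_seriesE /=; last by rewrite lt_eqF.
have x0 : 0 <= q ^+ N by exact: exprn_ge0.
have y0 : 0 <= q ^+ (n - N) by exact: exprn_ge0.
have i0 : 0 <= (1 - q)^-1 by rewrite invr_ge0; lra.
rewrite ler_wpM2r //; nra.
Qed.

Lemma lim_bnd (u : R ^nat) a b N : cvgn u ->
  (forall n, (N <= n)%N -> a <= u n <= b) -> a <= limn u <= b.
Proof.
move=> cu hu; apply/andP; split.
  by apply: limr_ge => //; exists N => // n /= Nn; case/andP: (hu n Nn).
by apply: limr_le => //; exists N => // n /= Nn; case/andP: (hu n Nn).
Qed.

Variables (q : R) (x : nat -> R) (B : R).
Hypothesis hq : 0 <= q < 1.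
Hypothesis hB : forall t, `|x t| <= B.
Let u := fun t => q ^+ t * x t.

Let q0 : 0 <= q. Proof. by case/andP: hq. Qed.

Let B0 : 0 <= B. Proof. exact: le_trans (hB 0%N). Qed.

Lemma ser_tail N n : (N <= n)%N ->
  `|series u n - series u N| <= q ^+ N * B / (1 - q).
Proof.
move=> Nn; rewrite sub_series_geq //.
apply: le_trans; first exact: ler_norm_sum.
apply: (@le_trans _ _ (\sum_(N <= t < n) q ^+ t * B)).
  apply: ler_sum => t _; rewrite /u normrM ger0_norm ?exprn_ge0 //.
  by rewrite ler_wpM2l ?exprn_ge0.
rewrite -mulr_suml mulrAC; apply: ler_wpM2r => //; exact: geo_tail.
Qed.

Lemma ser_cvg : cvgn (series u).
Proof.
pose y t := q ^+ t * (x t + B).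
have -> : u = y - geometric B q.
  apply/funext => t; change (q ^+ t * x t = q ^+ t * (x t + B) - B * q ^+ t).
  by rewrite mulrDr [q ^+ t * B]mulrC addrK.
apply: is_cvg_seriesB; last by apply: is_cvg_geometric_series; rewrite ger0_norm //; case/andP: hq.
apply: nondecreasing_is_cvgn.
  apply: (nondecreasing_series (P := predT)) => n _ _; rewrite /y mulr_ge0 ?exprn_ge0 //.
  by have := hB n; rewrite ler_norml => /andP[h _]; lra.
exists (2 * B / (1 - q)) => _ [n _ <-].
apply: (@le_trans _ _ (\sum_(0 <= t < n) q ^+ t * (2 * B))).
  rewrite /series /=; apply: ler_sum => t _; rewrite /y ler_wpM2l ?exprn_ge0 //.
  by have := hB t; rewrite ler_norml => /andP[_ h]; lra.
have g := geo_tail hq (leq0n n); rewrite expr0 div1r in g.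
by rewrite -mulr_suml mulrC ler_wpM2l ?mulr_ge0.
Qed.

Lemma ser_lim_tail N : `|limn (series u) - series u N| <= q ^+ N * B / (1 - q).
Proof.
have E : limn (series u) - series u N = limn (fun n => series u n - series u N).
  by apply/esym/cvg_lim => //; apply: cvgB; [exact: ser_cvg|exact: cvg_cst].
rewrite E ler_norml; apply: (lim_bnd (N := N)).
  by apply: is_cvgB; [exact: ser_cvg|exact: is_cvg_cst].
by move=> n Nn; rewrite -ler_norml; exact: ser_tail.
Qed.

End ser.

Lemma le_slack (R : realType) (x B K q : R) : 0 <= q < 1 ->
  (forall N, x <= B + K * q ^+ N) -> x <= B.
Proof.
move=> /andP[q0 q1] hx.
have c : (fun N => B + K * q ^+ N) @ \oo --> B + K * 0.
  apply: cvgD; first exact: cvg_cst.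
  by apply: cvgMr; apply: cvg_expr; rewrite ger0_norm.
rewrite mulr0 addr0 in c.
rewrite -(cvg_lim _ c) //; apply: limr_ge; first by apply/cvg_ex; exists B.
by exists 0%N => // n _; exact: hx.
Qed.
Section main.
Context (dS dA : measure_display) (S : measurableType dS)
  (A : measurableType dA) (R : realType)
  (P : R.-pker (S * A) ~> S) (r : S * A -> R) (gamma : R)
  (r_meas : measurable_fun setT r)
  (r_range : forall sa, 0 <= r sa <= 1)
  (gamma_range : 0 <= gamma < 1)
  (pi : R.-pker S ~> A).

Local Notation T := (pol_step pi P).
Let rp := pol_reward pi r.
Let x t := step_expect pi P r t.
Let V := value pi P r gamma.
Let VN N s := series (fun t => gamma ^+ t * x t s) N.

Let g0 : 0 <= gamma. Proof. by case/andP: gamma_range. Qed.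
Let g1 : gamma < 1. Proof. by case/andP: gamma_range. Qed.

Let r_bmf : bmf r. Proof. exact: (bmf_bnd r_meas r_range). Qed.
Let rp_bmf : bmf rp. Proof. exact: Kop_bmf. Qed.
Let rp_rng s : 0 <= rp s <= 1. Proof. exact: Kop_bnd. Qed.
Let x_bmf t : bmf (x t). Proof. exact: It_bmf. Qed.
Let x_rng t s : 0 <= x t s <= 1. Proof. exact: It_bnd. Qed.
Let x_abs t s : `|x t s| <= 1.
Proof. by have /andP[h1 h2] := x_rng t s; rewrite ler_norml; apply/andP; split; lra. Qed.

Let VN_tail N s : `|V s - VN N s| <= gamma ^+ N * 1 / (1 - gamma).
Proof. exact: (ser_lim_tail gamma_range (fun t => x_abs t s)). Qed.

Let VN0 s : VN 0 s = 0.
Proof. by rewrite /VN /series /= big_geq. Qed.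

Let VNS N : VN N.+1 = fun s => VN N s + gamma ^+ N * x N s.
Proof. by apply/funext => s; rewrite /VN seriesSr. Qed.

Let VN_bmf N : bmf (VN N).
Proof.
elim: N => [|N IH]; first by rewrite (_ : VN 0 = fun _ => 0); [exact: bmf_cst|apply/funext].
by rewrite VNS; apply: bmfD => //; exact: bmfZ.
Qed.

Let V_abs s : `|V s| <= 1 / (1 - gamma).
Proof. by have := VN_tail 0 s; rewrite VN0 subr0 expr0 mul1r. Qed.

Let V_meas : measurable_fun setT V.
Proof.
apply: (measurable_fun_cvg (h := VN)) => [m|s _]; first by case: (VN_bmf m).
exact: (ser_cvg gamma_range (fun t => x_abs t s)).
Qed.

Let V_bmf : bmf V.
Proof. by split => //; exists (1 / (1 - gamma)). Qed.

Let T0 : T (fun _ => 0) = fun _ => 0.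
Proof.
apply/funext => s.
have /andP[h1 h2] := T_bnd P pi (bmf_cst S 0) (a := 0) (b := 0) (fun _ => introT andP (conj (lexx (0 : R)) (lexx (0 : R)))) s.
by apply/le_anti; rewrite h1 h2.
Qed.

Let VN_bell N : VN N.+1 = fun s => rp s + gamma * T (VN N) s.
Proof.
elim: N => [|N IH].
  rewrite VNS (_ : VN 0 = fun _ => 0); last by apply/funext.
  by rewrite T0; apply/funext => s; rewrite expr0 mul1r mulr0 addr0 add0r.
rewrite [VN N.+2]VNS [in RHS]VNS IH T_D //; last exact: bmfZ.
rewrite T_Z //; apply/funext => s.
change (x N.+1 s) with (T (x N) s).
rewrite exprS; ring.
Qed.

Let i0 : 0 <= (1 - gamma)^-1. Proof. by rewrite invr_ge0 subr_ge0 ltW. Qed.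

Let TV_diff N s : `|T (VN N) s - T V s| <= gamma ^+ N * (1 - gamma)^-1.
Proof.
have bw : bmf (fun s => VN N s + (-1) * V s) by apply: bmfD => //; exact: bmfZ.
have := T_bnd P pi bw (a := - (gamma ^+ N * (1 - gamma)^-1)) (b := gamma ^+ N * (1 - gamma)^-1).
rewrite T_D //; last exact: bmfZ.
rewrite T_Z // => H.
have {}H := H _ s; rewrite ler_norml; move: H; rewrite mulN1r.
apply; move=> s'; rewrite mulN1r -ler_norml distrC.
by have := VN_tail N s'; rewrite mulr1.
Qed.

Let bellman s : V s = rp s + gamma * T V s.
Proof.
apply/eqP; rewrite -subr_eq0 -normr_le0.
apply: (@le_slack _ _ 0 (2 * (1 - gamma)^-1) gamma gamma_range) => N.
have E : V s - (rp s + gamma * T V s) =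
   (V s - VN N.+1 s) + gamma * (T (VN N) s - T V s).
  by rewrite VN_bell /=; ring.
rewrite E; have := VN_tail N.+1 s; have := TV_diff N s.
rewrite mulr1 exprS.
set a := V s - VN N.+1 s; set b := T (VN N) s - T V s.
set p := gamma ^+ N; set i := (1 - gamma)^-1 => hb ha.
have p0 : 0 <= p by exact: exprn_ge0.
have pi0 : 0 <= p * i by exact: mulr_ge0.
have : `|a + gamma * b| <= `|a| + gamma * `|b|.
  by rewrite (le_trans (ler_normD _ _)) // normrM ger0_norm.
have : gamma * `|b| <= gamma * (p * i) by rewrite ler_wpM2l.
have : gamma * (p * i) <= p * i by rewrite ler_piMl // ltW.
move: ha; rewrite -mulrA => ha.
nra.
Qed.

Context (h : S -> R) (h_meas : measurable_fun setT h)
  (h_bdd : exists M : R, forall s, `|h s| <= M)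
  (lam : R) (lam_range : 0 <= lam <= 1)
  (eps_l eps_u : R) (eps_l_ge0 : 0 <= eps_l) (eps_u_ge0 : 0 <= eps_u)
  (hV : forall s, - eps_l <= h s - value pi P r gamma s <= eps_u).

Let q := lam * gamma.
Let c := (1 - lam) * gamma.
Let q_range : 0 <= q < 1.
Proof.
case/andP: lam_range => l0 l1; apply/andP; split; first exact: mulr_ge0.
exact: le_lt_trans (ler_piMl g0 l1) g1.
Qed.
Let q0 : 0 <= q. Proof. by case/andP: q_range. Qed.
Let c0 : 0 <= c. Proof. by case/andP: lam_range => l0 l1; rewrite /c mulr_ge0 // subr_ge0. Qed.
Let j0 : 0 <= (1 - q)^-1.
Proof. by rewrite invr_ge0 subr_ge0 ltW //; case/andP: q_range. Qed.

Let h_bmf : bmf h. Proof. by split. Qed.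
Let e s := h s + (-1) * V s.
Let e_bmf : bmf e. Proof. by apply: bmfD => //; exact: bmfZ. Qed.
Let e_rng s : - eps_l <= e s <= eps_u. Proof. by rewrite /e mulN1r; exact: hV. Qed.

Let rr := reshaped_reward P r h lam gamma.
Let rrp := pol_reward pi rr.

Let rr_eq : rr = fun sa => r sa + c * Pint P h sa.
Proof. by apply/funext. Qed.

Let rr_bmf : bmf rr.
Proof. by rewrite rr_eq; apply: bmfD => //; apply: bmfZ; exact: Pint_bmf. Qed.

Let rrp_eq : rrp = fun s => V s + (-q) * T V s + c * T e s.
Proof.
rewrite /rrp /pol_reward.
change (Kop pi rr = fun s => V s + (-q) * T V s + c * T e s).
rewrite rr_eq KopD //; last by apply: bmfZ; exact: Pint_bmf.
rewrite KopZ; last exact: Pint_bmf.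
rewrite -TE (_ : h = fun s => V s + e s); last by apply/funext => s; rewrite /e; ring.
rewrite T_D //; apply/funext => s.
change (Kop pi r s) with (rp s); rewrite (bellman s) /q /c; ring.
Qed.

Let y t := step_expect pi P rr t.

Let y_eq t s : y t s = iter t T V s + (-q) * iter t.+1 T V s + c * iter t.+1 T e s.
Proof.
rewrite /y /step_expect -/rrp rrp_eq.
have bTV : bmf (T V) by exact: T_bmf.
have bTe : bmf (T e) by exact: T_bmf.
have bVq : bmf (fun s0 : S => V s0 + - q * T V s0) by apply: bmfD => //; exact: bmfZ.
rewrite It_D //; last by apply: bmfZ.
rewrite It_D //; last by apply: bmfZ.
by rewrite It_Z // It_Z // -!It_S.
Qed.

Let rrp_bmf : bmf rrp. Proof. exact: Kop_bmf. Qed.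

Let VtN N s := series (fun t => q ^+ t * y t s) N.
Let EN N s := series (fun t => q ^+ t * iter t.+1 T e s) N.

Let VtN_eq N s : VtN N s = V s - q ^+ N * iter N T V s + c * EN N s.
Proof.
elim: N => [|N IH].
  by rewrite /VtN /EN /series /= !big_geq // expr0 mul1r mulr0 addr0 subrr.
rewrite /VtN /EN !seriesSr -/(VtN N s) -/(EN N s) IH y_eq exprS; ring.
Qed.

Let EN_rng N s : - (eps_l * (1 - q)^-1) <= EN N s <= eps_u * (1 - q)^-1.
Proof.
have G := geo_tail q_range (leq0n N); rewrite expr0 div1r in G.
have w t : - eps_l <= iter t.+1 T e s <= eps_u by exact: It_bnd.
have Sge : 0 <= \sum_(0 <= t < N) q ^+ t by apply: sumr_ge0 => t _; exact: exprn_ge0.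
apply/andP; split.
  apply: (@le_trans _ _ (\sum_(0 <= t < N) q ^+ t * (- eps_l))).
    by rewrite -mulr_suml mulrN lerN2 mulrC ler_wpM2l.
  rewrite /EN /series /=; apply: ler_sum => t _; rewrite ler_wpM2l ?exprn_ge0 //.
  by case/andP: (w t).
apply: (@le_trans _ _ (\sum_(0 <= t < N) q ^+ t * eps_u)).
  rewrite /EN /series /=; apply: ler_sum => t _; rewrite ler_wpM2l ?exprn_ge0 //.
  by case/andP: (w t).
by rewrite -mulr_suml mulrC ler_wpM2l.
Qed.

Let Vt s := value pi P rr q s.

Lemma final_bnd s : - eps_l - c * eps_u / (1 - q) <= h s - Vt s <= eps_u + c * eps_l / (1 - q).
Proof.
have [M hM] := bmf_bound rrp_bmf.
have y_abs t : `|y t s| <= M.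
  by rewrite ler_norml; apply: (It_bnd P pi t rrp_bmf hM).
have tail N : `|Vt s - VtN N s| <= q ^+ N * M / (1 - q).
  exact: (ser_lim_tail q_range y_abs N).
have TNV N : `|iter N T V s| <= 1 / (1 - gamma).
  rewrite ler_norml; apply: (It_bnd P pi N V_bmf) => s'.
  by rewrite -ler_norml; exact: V_abs.
have idN N : h s - Vt s = e s + q ^+ N * iter N T V s - c * EN N s + (VtN N s - Vt s).
  by rewrite VtN_eq /e; ring.
have facts N : [/\ q ^+ N * iter N T V s <= q ^+ N * (1 / (1 - gamma)),
    - (q ^+ N * (1 / (1 - gamma))) <= q ^+ N * iter N T V s,
    c * (- (eps_l * (1 - q)^-1)) <= c * EN N s,
    c * EN N s <= c * (eps_u * (1 - q)^-1) &
    `|VtN N s - Vt s| <= q ^+ N * M * (1 - q)^-1].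
  have p0 : 0 <= q ^+ N by exact: exprn_ge0.
  have /andP[a1 a2] : - (1 / (1 - gamma)) <= iter N T V s <= 1 / (1 - gamma).
    by rewrite -ler_norml.
  have /andP[E1 E2] := EN_rng N s.
  split.
  - by rewrite ler_wpM2l.
  - by rewrite -mulrN ler_wpM2l.
  - by rewrite ler_wpM2l.
  - by rewrite ler_wpM2l.
  - by rewrite distrC; exact: tail.
apply/andP; split.
  rewrite -lerN2.
  apply: (le_slack (K := 1 / (1 - gamma) + M * (1 - q)^-1) q_range) => N.
  have [f1 f2 f3 f4 f5] := facts N.
  move: f5; rewrite ler_norml => /andP[f5 f6].
  have eN := e_rng s.
  rewrite (idN N).
  move: f1 f2 f3 f4 f5 f6 eN.
  set p := q ^+ N; set a := iter N T V s; set E := EN N s; set d := VtN N s - Vt s.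
  set i := (1 - q)^-1; set j := 1 / (1 - gamma).
  move=> f1 f2 f3 f4 f5 f6 eN.
  rewrite /e in eN *.
  nra.
apply: (le_slack (K := 1 / (1 - gamma) + M * (1 - q)^-1) q_range) => N.
have [f1 f2 f3 f4 f5] := facts N.
move: f5; rewrite ler_norml => /andP[f5 f6].
have eN := e_rng s.
rewrite (idN N).
move: f1 f2 f3 f4 f5 f6 eN.
set p := q ^+ N; set a := iter N T V s; set E := EN N s; set d := VtN N s - Vt s.
set i := (1 - q)^-1; set j := 1 / (1 - gamma).
move=> f1 f2 f3 f4 f5 f6 eN.
nra.
Qed.

End main.
Unset Implicit Arguments. Set Strict Implicit.

Theorem mainTheorem11 (dS dA : measure_display) (S : measurableType dS)
  (A : measurableType dA) (R : realType)
  (P : R.-pker (S * A) ~> S) (r : S * A -> R) (gamma : R)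
  (r_meas : measurable_fun setT r)
  (r_range : forall sa, 0 <= r sa <= 1)
  (gamma_range : 0 <= gamma < 1)
  (pi : R.-pker S ~> A) (h : S -> R)
  (h_meas : measurable_fun setT h)
  (h_bdd : exists M : R, forall s, `|h s| <= M)
  (lam : R) (lam_range : 0 <= lam <= 1)
  (eps_l eps_u : R) (eps_l_ge0 : 0 <= eps_l) (eps_u_ge0 : 0 <= eps_u)
  (hV : forall s, - eps_l <= h s - value pi P r gamma s <= eps_u) :
  forall s : S,
    - eps_l - (1 - lam) * gamma * eps_u / (1 - lam * gamma)
      <= h s - value pi P (reshaped_reward P r h lam gamma) (lam * gamma) s
      <= eps_u + (1 - lam) * gamma * eps_l / (1 - lam * gamma).
Proof. by move=> s; exact: (final_bnd r_meas r_range gamma_range h_meas h_bdd lam_range eps_l_ge0 eps_u_ge0 hV s). Qed.
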